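(* Let $\Omega$, $\mathcal{R}$, $\overline{C}$ be as in the context, with $\Omega$ nonempty and bounded and $\Omega\cap\mathcal{R}\ne\emptyset$. Define the set-valued map $\Gamma:\mathbb{R}\rightrightarrows\mathcal{S}^q$ by $\Gamma(w):=\{Y\in\Omega : \|Y\|_*-\|Y\|_2=w\}$, and suppose $\Gamma$ is calm at $0$ for each $Y\in\Gamma(0)$. Then there exists $\bar\rho>0$ such that for every $\rho>\bar\rho$: $Y^*$ is an optimal solution of $\min\{\langle\overline{C},Y\rangle : Y\in\Omega\cap\mathcal{R}\}$ if and only if $Y^*$ is an optimal solution of $$\min\{\,f_\rho(Y):=\langle\overline{C},Y\rangle+\rho(\|Y\|_*-\|Y\|_2) : Y\in\Omega\}.$$
   Context: $\mathcal{S}^q$ is the space of real symmetric $q\times q$ matrices with trace inner product and Frobenius norm; $\mathcal{S}^q_+$ the positive semidefinite cone; $\mathcal{N}^q$ the entrywise nonnegative matrices in $\mathcal{S}^q$. Given $\overline{C}\in\mathcal{S}^q$, a linear map $\mathcal{A}:\mathcal{S}^q\to\mathbb{R}^m$ and $b\in\mathbb{R}^m$, $\Omega:=\{Y\in\mathcal{S}^q_+\cap\mathcal{N}^q : \mathcal{A}(Y)=b\}$ and $\mathcal{R}:=\{Y\in\mathcal{S}^q:\operatorname{rank}(Y)\le1\}$. $\|Y\|_*$ is the nuclear norm (sum of singular values) and $\|Y\|_2$ the spectral norm (largest singular value). A set-valued map $\Psi:\mathcal{X}\rightrightarrows\mathcal{Z}$ between Euclidean spaces is calm at $\bar x$ for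 $\bar z\in\Psi(\bar x)$ if there exist $\alpha>0$ and neighborhoods $\mathcal{U}$ of $\bar x$, $\mathcal{V}$ of $\bar z$ with $\Psi(x)\cap\mathcal{V}\subseteq\Psi(\bar x)+\alpha\|x-\bar x\|\mathbb{B}$ for all $x\in\mathcal{U}$, where $\mathbb{B}$ is the closed unit ball. *)

(* Defs.v *)
From Stdlib Require Import Reals ClassicalEpsilon.
From mathcomp Require Import all_boot.
Set Implicit Arguments. Unset Strict Implicit. Unset Printing Implicit Defensive.
Open Scope R_scope.

Definition mat (q : nat) := 'I_q -> 'I_q -> R.
Definition vec (q : nat) := 'I_q -> R.

Definition sumI (q : nat) (F : 'I_q -> R) : R := \big[Rplus/R0]_(i < q) F i.
Definition maxI (q : nat) (F : 'I_q -> R) : R := \big[Rmax/R0]_(i < q) F i.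

Definition madd q (A B : mat q) : mat q := fun i j => A i j + B i j.
Definition mopp q (A : mat q) : mat q := fun i j => - A i j.
Definition mscale q (a : R) (A : mat q) : mat q := fun i j => a * A i j.

Definition is_sym q (A : mat q) : Prop := forall i j, A i j = A j i.

(* trace inner product <A,B> = tr(A^T B) = sum_{i,j} A_ij B_ij *)
Definition inner q (A B : mat q) : R := sumI (fun i => sumI (fun j => A i j * B i j)).
Definition frob q (A : mat q) : R := sqrt (inner A A).

Definition psd q (A : mat q) : Prop :=
  is_sym A /\ forall x : vec q, 0 <= sumI (fun i => sumI (fun j => x i * A i j * x j)).
Definition nonneg_mat q (A : mat q) : Prop := forall i j, 0 <= A i j.

(* rank(Y) <= 1: the column space of Y is contained in the span of one vector *)
Definition rank_le1 q (Y : mat q) : Prop :=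
  exists u : vec q, forall j, exists c : R, forall i, Y i j = c * u i.

Definition orthogonal q (U : mat q) : Prop :=
  forall i j, sumI (fun k => U k i * U k j) = (if i == j then 1 else 0).

Definition svd q (Y U V : mat q) (d : vec q) : Prop :=
  orthogonal U /\ orthogonal V /\ (forall k, 0 <= d k) /\
  forall i j, Y i j = sumI (fun k => U i k * d k * V j k).

Definition nuclear_norm q (Y : mat q) : R :=
  epsilon (inhabits R0)
    (fun s => exists U V d, svd Y U V d /\ s = sumI d).
Definition spectral_norm q (Y : mat q) : R :=
  epsilon (inhabits R0)
    (fun s => exists U V d, svd Y U V d /\ s = maxI d).

Definition linear_on_sym q m (Amap : mat q -> vec m) : Prop :=
  forall (a c : R) (Y Z : mat q), is_sym Y -> is_sym Z ->
    forall k, Amap (madd (mscale a Y) (mscale c Z)) k = a * Amap Y k + c * Amap Z k.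

Definition Omega q m (Amap : mat q -> vec m) (b : vec m) (Y : mat q) : Prop :=
  psd Y /\ nonneg_mat Y /\ forall k, Amap Y k = b k.

(* Calmness of Psi : R =>> S^q at xbar for zbar (neighbourhoods taken as balls) *)
Definition calm q (Psi : R -> mat q -> Prop) (xbar : R) (zbar : mat q) : Prop :=
  exists alpha eps1 eps2, 0 < alpha /\ 0 < eps1 /\ 0 < eps2 /\
    forall (x : R) (z : mat q), Rabs (x - xbar) <= eps1 ->
      frob (madd z (mopp zbar)) <= eps2 -> Psi x z ->
      exists z', Psi xbar z' /\ frob (madd z (mopp z')) <= alpha * Rabs (x - xbar).

Definition Gamma q m (Amap : mat q -> vec m) (b : vec m) (w : R) (Y : mat q) : Prop :=
  Omega Amap b Y /\ nuclear_norm Y - spectral_norm Y = w.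

Definition is_argmin q (S : mat q -> Prop) (f : mat q -> R) (Ystar : mat q) : Prop :=
  S Ystar /\ forall Y, S Y -> f Ystar <= f Y.

(* Main.v *)
Require Import Defs.
From Stdlib Require Import Reals Lra Psatz ClassicalEpsilon FunctionalExtensionality.
From HB Require Import structures.
From mathcomp Require Import all_boot ssralg ssrnum matrix mxalgebra.
From mathcomp Require Import Rstruct.
Open Scope R_scope.
Set Implicit Arguments. Unset Strict Implicit. Unset Printing Implicit Defensive.
Import GRing.Theory.
Local Open Scope ring_scope.
Local Open Scope R_scope.

Lemma complete_orth q (U : mat q) : orthogonal U ->
  forall i j, sumI (fun k => U i k * U j k) = (if i == j then 1 else 0).
Proof.
move=> hU.
pose M : 'M[R]_q := \matrix_(i, j) U i j.
have h1 : (M^T *m M = 1%:M)%R.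
  apply/matrixP => i j; rewrite !mxE.
  transitivity (sumI (fun k => U k i * U k j)).
    by apply: eq_bigr => k _; rewrite !mxE.
  rewrite hU; by case: (i == j).
have h2 := mulmx1C h1.
move=> i j; move/matrixP: h2 => /(_ i j); rewrite !mxE => h.
transitivity ((i == j)%:R : R); last by case: (i == j).
rewrite -h.
by apply: eq_bigr => k _; rewrite !mxE.
Qed.

Lemma orth_exists q k (u : nat -> vec q) : (k < q)%nat ->
  exists v : vec q, (forall i, (i < k)%nat -> sumI (fun j => v j * u i j) = 0)
   /\ exists j, v j <> 0.
Proof.
move=> hk.
pose M : 'M[R]_(k, q) := \matrix_(i, j) u (nat_of_ord i) j.
pose K := kermx (M^T).
have hK : (K *m M^T = 0)%R by exact: mulmx_ker.
have hr : \rank K = (q - \rank M^T)%N by rewrite mxrank_ker.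
have hrk : (\rank M^T <= k)%N by rewrite mxrank_tr rank_leq_row.
have hK0 : K != 0%R.
  rewrite -mxrank_eq0 hr subn_eq0 -ltnNge.
  exact: leq_ltn_trans hrk hk.
have [i [j hij]] : exists i j, K i j <> 0.
  apply: Classical_Prop.NNPP => hn; move/eqP: hK0; apply; apply/matrixP => i j.
  rewrite [RHS]mxE; apply: Classical_Prop.NNPP => hij; apply: hn; exists i, j; exact hij.
exists (fun j => K i j); split; last by exists j.
move=> l hl; move/matrixP: hK => /(_ i (Ordinal hl)); rewrite !mxE => h; etransitivity; last exact h.
by apply: eq_bigr => m _; rewrite !mxE.
Qed.
Lemma Rplus_assoc' : associative Rplus.
Proof. move=> x y z; ring. Qed.
Lemma Rplus_comm' : commutative Rplus.
Proof. move=> x y; ring. Qed.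
Lemma Rplus_0_l' : left_id R0 Rplus.
Proof. move=> x; ring. Qed.
HB.instance Definition _ := Monoid.isComLaw.Build R R0 Rplus Rplus_assoc' Rplus_comm' Rplus_0_l'.

Section Sums.
Variable q : nat.
Implicit Types F G : 'I_q -> R.

Lemma sumI_ext F G : (forall i, F i = G i) -> sumI F = sumI G.
Proof. by move=> h; apply: eq_bigr => i _; exact: h. Qed.

Lemma sumI_add F G : sumI (fun i => F i + G i) = sumI F + sumI G.
Proof. by rewrite /sumI big_split. Qed.

Lemma sumI_scal c F : sumI (fun i => c * F i) = c * sumI F.
Proof.
rewrite /sumI; apply: esym; apply: (big_morph (fun x => c * x)).
- by move=> x y; ring.
- by ring.
Qed.

Lemma sumI_scalr c F : sumI (fun i => F i * c) = sumI F * c.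
Proof. rewrite Rmult_comm -sumI_scal; apply: sumI_ext => i; ring. Qed.

Lemma sumI_0 : sumI (fun _ : 'I_q => 0) = 0.
Proof. by rewrite /sumI big1. Qed.

Lemma sumI_opp F : sumI (fun i => - F i) = - sumI F.
Proof.
have -> : - sumI F = (-1) * sumI F by ring.
rewrite -sumI_scal; apply: sumI_ext => i; ring.
Qed.

Lemma sumI_sub F G : sumI (fun i => F i - G i) = sumI F - sumI G.
Proof.
rewrite /Rminus -sumI_opp -sumI_add; apply: sumI_ext => i; ring.
Qed.

Lemma sumI_le F G : (forall i, F i <= G i) -> sumI F <= sumI G.
Proof.
move=> h; rewrite /sumI; apply: (big_ind2 (fun x y => x <= y)).
- lra.
- move=> *; lra.
- by move=> i _; exact: h.
Qed.

Lemma sumI_nonneg F : (forall i, 0 <= F i) -> 0 <= sumI F.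
Proof. move=> h; rewrite -sumI_0; exact: sumI_le. Qed.

Lemma sumI_swap (F : 'I_q -> 'I_q -> R) :
  sumI (fun i => sumI (fun j => F i j)) = sumI (fun j => sumI (fun i => F i j)).
Proof. by rewrite /sumI exchange_big. Qed.

Lemma sumI_split F l : sumI F = F l + sumI (fun k => if k == l then 0 else F k).
Proof.
rewrite /sumI (bigD1 l) //=; congr (_ + _).
rewrite [in RHS](bigD1 l) //= eqxx Rplus_0_l.
by apply: eq_bigr => i /negbTE ->.
Qed.

Lemma sumI_delta F l : sumI (fun k => (if k == l then 1 else 0) * F k) = F l.
Proof.
rewrite (sumI_split _ l) eqxx Rmult_1_l.
have -> : sumI (fun k => if k == l then 0 else (if k == l then 1 else 0) * F k) = sumI (fun _ : 'I_q => 0).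
  by apply: sumI_ext => k; case: (k == l) => //; ring.
rewrite sumI_0; ring.
Qed.

Lemma sumI_delta' F l : sumI (fun k => F k * (if l == k then 1 else 0)) = F l.
Proof.
rewrite -(sumI_delta F l); apply: sumI_ext => k.
by rewrite eq_sym; ring.
Qed.

Lemma sumI_zero_nonneg F : (forall i, 0 <= F i) -> sumI F = 0 -> forall i, F i = 0.
Proof.
move=> h hs i; move: hs; rewrite (sumI_split _ i) => hs.
have : 0 <= sumI (fun k => if k == i then 0 else F k).
  apply: sumI_nonneg => k; case: (k == i) => //; lra.
move: (h i); lra.
Qed.

Lemma big_cv (r : seq 'I_q) (F : nat -> 'I_q -> R) L :
  (forall i, Un_cv (fun n => F n i) (L i)) ->
  Un_cv (fun n => \big[Rplus/0]_(j <- r) F n j) (\big[Rplus/0]_(j <- r) L j).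
Proof.
move=> h; elim: r => [|i r IH].
- move=> e he; exists 0%nat => n _; rewrite /R_dist !big_nil Rminus_diag Rabs_R0 //.
- have -> : \big[Rplus/0]_(j <- i :: r) L j = L i + \big[Rplus/0]_(j <- r) L j.
    by rewrite big_cons.
  have -> : (fun n => \big[Rplus/0]_(j <- i :: r) F n j) =
            (fun n => F n i + \big[Rplus/0]_(j <- r) F n j).
    by apply: FunctionalExtensionality.functional_extensionality => n; rewrite big_cons.
  exact: CV_plus.
Qed.

Lemma sumI_cv (F : nat -> 'I_q -> R) L :
  (forall i, Un_cv (fun n => F n i) (L i)) -> Un_cv (fun n => sumI (F n)) (sumI L).
Proof. move=> h; exact: big_cv. Qed.

End Sums.
Definition dot q (x y : vec q) := sumI (fun i => x i * y i).
Definition mv q (A : mat q) (x : vec q) : vec q := fun i => sumI (fun j => A i j * x j).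
Definition bil q (A : mat q) (x y : vec q) := sumI (fun i => sumI (fun j => x i * A i j * y j)).
Definition colv q (U : mat q) (k : 'I_q) : vec q := fun i => U i k.

Section Vec.
Variable q : nat.
Implicit Types x y z : vec q.
Implicit Types A W : mat q.

Lemma dot_comm x y : dot x y = dot y x.
Proof. apply: sumI_ext => i; ring. Qed.

Lemma dot_nonneg x : 0 <= dot x x.
Proof. apply: sumI_nonneg => i; nra. Qed.

Lemma dot_zero x : dot x x = 0 -> forall i, x i = 0.
Proof.
move=> h i; have := sumI_zero_nonneg (F := fun i => x i * x i) _ h i.
move=> /(_ (fun i => ltac:(nra))) ?; nra.
Qed.

Lemma dot_lin a b x y z :
  dot (fun i => a * x i + b * y i) z = a * dot x z + b * dot y z.
Proof.
rewrite /dot -!sumI_scal -sumI_add; apply: sumI_ext => i; ring.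
Qed.

Lemma CS x y : dot x y * dot x y <= dot x x * dot y y.
Proof.
have hx := dot_nonneg x.
case: (Req_dec (dot x x) 0) => hxx.
- have h0 := dot_zero hxx.
  have -> : dot x y = 0.
    rewrite /dot (sumI_ext (G := fun _ => 0)) ?sumI_0 // => i; rewrite h0; ring.
  rewrite hxx; lra.
- set t := dot x y / dot x x.
  have := dot_nonneg (fun i => y i - t * x i).
  have -> : dot (fun i => y i - t * x i) (fun i => y i - t * x i) =
     dot y y + (-2 * t) * dot x y + (t * t) * dot x x.
    rewrite /dot -!sumI_scal -!sumI_add; apply: sumI_ext => i; ring.
  have hxp : 0 < dot x x by lra.
  rewrite /t => h.
  have : 0 <= dot x x * (dot y y + -2 * (dot x y / dot x x) * dot x y +
    dot x y / dot x x * (dot x y / dot x x) * dot x x) by nra.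
  have -> : dot x x * (dot y y + -2 * (dot x y / dot x x) * dot x y +
    dot x y / dot x x * (dot x y / dot x x) * dot x x) =
    dot x x * dot y y - dot x y * dot x y by field; lra.
  lra.
Qed.

Lemma bil_dot A x y : bil A x y = dot x (mv A y).
Proof.
rewrite /bil /dot /mv; apply: sumI_ext => i; rewrite -sumI_scal.
apply: sumI_ext => j; ring.
Qed.

Lemma mv_sym A x y : is_sym A -> dot (mv A x) y = dot x (mv A y).
Proof.
move=> hA; rewrite /dot /mv.
transitivity (sumI (fun i => sumI (fun j => A i j * x j * y i))).
  apply: sumI_ext => i; rewrite -sumI_scalr; apply: sumI_ext => j; ring.
rewrite sumI_swap; apply: sumI_ext => j; rewrite -sumI_scal.
apply: sumI_ext => i; rewrite hA; ring.
Qed.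

Lemma bil_sym A x y : is_sym A -> bil A x y = bil A y x.
Proof.
move=> hA; rewrite !bil_dot -mv_sym // dot_comm //.
Qed.

Lemma inner_rows W : inner W W = sumI (fun i => dot (fun j => W i j) (fun j => W i j)).
Proof. by []. Qed.

Lemma bil_bound W x y : bil W x y * bil W x y <= inner W W * dot x x * dot y y.
Proof.
rewrite bil_dot.
have h1 := CS x (mv W y).
have h2 : dot (mv W y) (mv W y) <= inner W W * dot y y.
  rewrite /inner -sumI_scalr; apply: sumI_le => i.
  have := CS (fun j => W i j) y.
  rewrite /dot /mv => h; exact h.
have := dot_nonneg x; have := dot_nonneg (mv W y); nra.
Qed.

End Vec.

Definition trace q (Y : mat q) := sumI (fun i => Y i i).

Section SVD.
Variable q : nat.
Implicit Types x y z : vec q.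
Implicit Types A W Y U V : mat q.
Implicit Types d : vec q.

Lemma sum_prod (F G : 'I_q -> R) :
  sumI F * sumI G = sumI (fun i => sumI (fun j => F i * G j)).
Proof.
rewrite -sumI_scalr; apply: sumI_ext => i; rewrite -sumI_scal //.
Qed.

Lemma sumI_abs (F : 'I_q -> R) : Rabs (sumI F) <= sumI (fun i => Rabs (F i)).
Proof.
apply: Rabs_le; split.
- rewrite -sumI_opp; apply: sumI_le => i.
  have := Rle_abs (- F i); rewrite Rabs_Ropp; lra.
- apply: sumI_le => i; exact: Rle_abs.
Qed.

Lemma bil_svd Y U V d x y : svd Y U V d ->
  bil Y x y = sumI (fun k => d k * dot x (colv U k) * dot y (colv V k)).
Proof.
move=> [_ [_ [_ hY]]].
rewrite /bil.
transitivity (sumI (fun i => sumI (fun j => sumI (fun k =>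
    x i * U i k * d k * V j k * y j)))).
  apply: sumI_ext => i; apply: sumI_ext => j; rewrite hY -sumI_scal -sumI_scalr.
  apply: sumI_ext => k; ring.
transitivity (sumI (fun i => sumI (fun k => sumI (fun j =>
    x i * U i k * d k * V j k * y j)))).
  apply: sumI_ext => i; exact: sumI_swap.
rewrite sumI_swap; apply: sumI_ext => k.
rewrite Rmult_assoc /dot /colv sum_prod -sumI_scal.
apply: sumI_ext => i; rewrite -sumI_scal; apply: sumI_ext => j; ring.
Qed.

Lemma orth_col U k l : orthogonal U ->
  dot (colv U k) (colv U l) = if k == l then 1 else 0.
Proof. move=> hU; exact: hU. Qed.

Lemma parseval U x : orthogonal U ->
  sumI (fun k => dot x (colv U k) * dot x (colv U k)) = dot x x.
Proof.
move=> hU; have hc := complete_orth hU.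
transitivity (sumI (fun k => sumI (fun i => sumI (fun j => x i * x j * (U i k * U j k))))).
  apply: sumI_ext => k; rewrite /dot sum_prod; apply: sumI_ext => i;
  apply: sumI_ext => j; rewrite /colv; ring.
rewrite sumI_swap; apply: sumI_ext => i; rewrite sumI_swap.
transitivity (sumI (fun j => x i * x j * (if i == j then 1 else 0))).
  apply: sumI_ext => j; rewrite -hc sumI_scal //.
rewrite (sumI_ext (G := fun j => (if j == i then 1 else 0) * (x i * x j))).
  by rewrite sumI_delta.
by move=> j; rewrite eq_sym; ring.
Qed.

Lemma maxI_cases d : maxI d = 0 \/ exists k, maxI d = d k.
Proof.
rewrite /maxI; apply: (big_ind (fun v => v = 0 \/ exists k, v = d k)).
- by left.
- move=> a b ha hb; rewrite /Rmax; case: Rle_dec => _; auto.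
- by move=> i _; right; exists i.
Qed.



Lemma maxI_ge d : (forall k, 0 <= d k) -> 0 <= maxI d /\ forall k, d k <= maxI d.
Proof.
move=> hd; rewrite /maxI.
have : forall (r : seq 'I_q), 0 <= \big[Rmax/0]_(j <- r) d j /\
   forall k, k \in r -> d k <= \big[Rmax/0]_(j <- r) d j.
  elim => [|i r [IH1 IH2]].
  - by rewrite big_nil; split; [lra|].
  - rewrite big_cons; split; first by apply: Rle_trans (Rmax_r _ _).
    move=> k; rewrite in_cons => /orP [/eqP -> | hk]; first exact: Rmax_l.
    apply: Rle_trans (Rmax_r _ _); exact: IH2.
move=> /(_ (index_enum 'I_q)) [h1 h2]; split => // k; apply: h2.
by rewrite mem_index_enum.
Qed.

Lemma maxI_le_sum d : (forall k, 0 <= d k) -> maxI d <= sumI d.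
Proof.
move=> hd; case: (maxI_cases d) => [-> | [k ->]].
- exact: sumI_nonneg.
- rewrite (sumI_split _ k); have : 0 <= sumI (fun l => if l == k then 0 else d l).
    apply: sumI_nonneg => l; case: (l == k) => //; lra.
  lra.
Qed.

End SVD.

Section SVD2.
Variable q : nat.
Implicit Types x y z : vec q.
Implicit Types A W Y U V : mat q.
Implicit Types d : vec q.

Lemma dot_col_delta U k l : orthogonal U ->
  dot (colv U k) (colv U l) = if l == k then 1 else 0.
Proof. move=> hU; rewrite (orth_col _ _ hU) eq_sym //. Qed.

Lemma svd_bound Y U V d x y : svd Y U V d ->
  bil Y x y * bil Y x y <= (maxI d * maxI d) * dot x x * dot y y.
Proof.
move=> hs; have [hU [hV [hd _]]] := hs.
have [hm0 hm] := maxI_ge hd.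
rewrite (bil_svd _ _ hs).
set a := fun k => dot x (colv U k).
set b := fun k => dot y (colv V k).
have hab : sumI (fun k => Rabs (a k) * Rabs (b k)) * sumI (fun k => Rabs (a k) * Rabs (b k))
    <= dot x x * dot y y.
  have := CS (fun k => Rabs (a k)) (fun k => Rabs (b k)).
  rewrite /dot.
  have -> : sumI (fun i => Rabs (a i) * Rabs (a i)) = dot x x.
    rewrite -(parseval x hU); apply: sumI_ext => k.
    rewrite -Rabs_mult Rabs_pos_eq //; rewrite /a; nra.
  have -> : sumI (fun i => Rabs (b i) * Rabs (b i)) = dot y y.
    rewrite -(parseval y hV); apply: sumI_ext => k.
    rewrite -Rabs_mult Rabs_pos_eq //; rewrite /b; nra.
  by [].
have h1 := sumI_abs (fun k => d k * a k * b k).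
have h2 : sumI (fun k => Rabs (d k * a k * b k)) <=
          maxI d * sumI (fun k => Rabs (a k) * Rabs (b k)).
  rewrite -sumI_scal; apply: sumI_le => k.
  rewrite !Rabs_mult (Rabs_pos_eq (d k)) // Rmult_assoc.
  apply: Rmult_le_compat_r; last exact: hm.
  apply: Rmult_le_pos; exact: Rabs_pos.
have h3 : 0 <= sumI (fun k => Rabs (a k) * Rabs (b k)).
  apply: sumI_nonneg => k; have := Rabs_pos (a k); have := Rabs_pos (b k); nra.
set S := sumI (fun k => d k * a k * b k) in h1 *.
set T := sumI (fun k => Rabs (a k) * Rabs (b k)) in hab h2 h3 *.
have hS : Rabs S <= maxI d * T by lra.
have : S * S <= (maxI d * T) * (maxI d * T).
  have -> : S * S = Rabs S * Rabs S by rewrite -Rabs_mult Rabs_pos_eq //; nra.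
  have := Rabs_pos S; nra.
have := dot_nonneg x; have := dot_nonneg y; nra.
Qed.

Lemma bil_zero_l A y : bil A (fun _ => 0) y = 0.
Proof.
rewrite /bil (sumI_ext (G := fun _ => 0)) ?sumI_0 // => i.
rewrite (sumI_ext (G := fun _ => 0)) ?sumI_0 // => j; ring.
Qed.

Lemma dot_zero_l x : dot (fun _ => 0) x = 0.
Proof. rewrite /dot (sumI_ext (G := fun _ => 0)) ?sumI_0 // => i; ring. Qed.

Lemma svd_attain Y U V d : svd Y U V d ->
  exists x y, dot x x <= 1 /\ dot y y <= 1 /\ bil Y x y = maxI d.
Proof.
move=> hs; have [hU [hV [hd _]]] := hs.
case: (maxI_cases d) => [-> | [k ->]].
- exists (fun _ => 0), (fun _ => 0); rewrite dot_zero_l bil_zero_l; split; lra.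
- exists (colv U k), (colv V k); rewrite !orth_col // eqxx; split; [lra|split; [lra|]].
  rewrite (bil_svd _ _ hs).
  rewrite (sumI_ext (G := fun l => (if l == k then 1 else 0) * d l)) ?sumI_delta //.
  move=> l; rewrite !dot_col_delta //; case: (l == k); ring.
Qed.

Lemma bil_le_of_bound Y m x y : 0 <= m -> dot x x <= 1 -> dot y y <= 1 ->
  bil Y x y * bil Y x y <= (m * m) * dot x x * dot y y -> bil Y x y <= m.
Proof.
move=> hm hx hy h.
have := dot_nonneg x; have := dot_nonneg y => h1 h2.
have : bil Y x y * bil Y x y <= m * m.
  apply: Rle_trans h _.
  have : dot x x * dot y y <= 1 by nra.
  have : 0 <= m * m by nra.
  nra.
nra.
Qed.

Lemma spec_unique Y U1 V1 d1 U2 V2 d2 : svd Y U1 V1 d1 -> svd Y U2 V2 d2 ->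
  maxI d1 = maxI d2.
Proof.
have key : forall U1 V1 d1 U2 V2 d2, svd Y U1 V1 d1 -> svd Y U2 V2 d2 ->
    maxI d1 <= maxI d2.
  move=> U1' V1' d1' U2' V2' d2' h1 h2.
  have [x [y [hx [hy <-]]]] := svd_attain h1.
  have [_ [_ [hd2 _]]] := h2.
  apply: bil_le_of_bound => //; first exact: (proj1 (maxI_ge hd2)).
  exact: svd_bound h2.
move=> h1 h2; apply: Rle_antisym; [exact: key h1 h2 | exact: key h2 h1].
Qed.

Lemma bil_sub Y Z x y :
  bil Y x y = bil Z x y + bil (fun i j => Y i j - Z i j) x y.
Proof.
rewrite /bil -sumI_add; apply: sumI_ext => i; rewrite -sumI_add.
apply: sumI_ext => j; ring.
Qed.

Lemma spec_lip Y Z UY VY dY UZ VZ dZ t : svd Y UY VY dY -> svd Z UZ VZ dZ ->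
  0 <= t -> inner (fun i j => Y i j - Z i j) (fun i j => Y i j - Z i j) <= t * t ->
  maxI dY - maxI dZ <= t.
Proof.
move=> hY hZ ht hW.
have [x [y [hx [hy hb]]]] := svd_attain hY.
have [_ [_ [hdZ _]]] := hZ.
have h1 : bil Z x y <= maxI dZ.
  apply: bil_le_of_bound => //; first exact: (proj1 (maxI_ge hdZ)).
  exact: svd_bound hZ.
have h2 : bil (fun i j => Y i j - Z i j) x y <= t.
  apply: bil_le_of_bound => //.
  apply: Rle_trans (bil_bound _ _ _) _.
  have := dot_nonneg x; have := dot_nonneg y.
  have : 0 <= inner (fun i j => Y i j - Z i j) (fun i j => Y i j - Z i j).
    apply: sumI_nonneg => i; apply: sumI_nonneg => j; cbv beta; exact: Rle_0_sqr.
  move=> h0 h1' h2'.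
  have h4 : 0 <= dot x x * dot y y by apply: Rmult_le_pos.
  rewrite (Rmult_assoc (inner _ _)) (Rmult_assoc (t * t)).
  apply: Rmult_le_compat_r => //.
rewrite -hb (bil_sub Y Z); lra.
Qed.

Lemma bil_lin_l A a b x y z :
  bil A (fun i => a * x i + b * y i) z = a * bil A x z + b * bil A y z.
Proof.
rewrite /bil -!sumI_scal -sumI_add; apply: sumI_ext => i.
rewrite -!sumI_scal -sumI_add; apply: sumI_ext => j; ring.
Qed.

Lemma bil_lin_r A a b x y z :
  bil A x (fun i => a * y i + b * z i) = a * bil A x y + b * bil A x z.
Proof.
rewrite /bil -!sumI_scal -sumI_add; apply: sumI_ext => i.
rewrite -!sumI_scal -sumI_add; apply: sumI_ext => j; ring.
Qed.

Lemma svd_trace Y U V d : svd Y U V d -> psd Y -> sumI d = trace Y.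
Proof.
move=> hs [hsym hpsd]; have [hU [hV [hd hY]]] := hs.
have htr : trace Y = sumI (fun k => d k * dot (colv U k) (colv V k)).
  rewrite /trace (sumI_ext (G := fun i => sumI (fun k => U i k * d k * V i k))) //.
  rewrite sumI_swap; apply: sumI_ext => k; rewrite /dot -sumI_scal.
  apply: sumI_ext => i; rewrite /colv; ring.
have hUV : forall k, bil Y (colv U k) (colv V k) = d k.
  move=> k; rewrite (bil_svd _ _ hs).
  rewrite (sumI_ext (G := fun l => (if l == k then 1 else 0) * d l)) ?sumI_delta //.
  move=> l; rewrite !dot_col_delta //; case: (l == k); ring.
have hUU : forall k, bil Y (colv U k) (colv U k) = d k * dot (colv U k) (colv V k).
  move=> k; rewrite (bil_svd _ _ hs).
  rewrite (sumI_ext (G := fun l => (if l == k then 1 else 0) * (d l * dot (colv U k) (colv V l))))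
     ?(sumI_delta (fun l => d l * dot (colv U k) (colv V l))) //.
  move=> l; rewrite !dot_col_delta //; case: (l == k); ring.
have hVV : forall k, bil Y (colv V k) (colv V k) = d k * dot (colv U k) (colv V k).
  move=> k; rewrite (bil_svd _ _ hs).
  rewrite (sumI_ext (G := fun l => (if l == k then 1 else 0) * (d l * dot (colv U l) (colv V k))))
     ?(sumI_delta (fun l => d l * dot (colv U l) (colv V k))) //.
  move=> l; rewrite (dot_comm (colv V k) (colv U l)) !dot_col_delta //; case: (l == k); ring.
apply: Rle_antisym.
- rewrite htr; apply: sumI_le => k.
  have h := hpsd (fun i => 1 * colv U k i + (-1) * colv V k i).
  rewrite /= in h; move: h; rewrite -/(bil Y _ _).
  rewrite bil_lin_l !bil_lin_r hUU hVV hUV (bil_sym _ _ hsym) hUV; lra.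
- rewrite htr; apply: sumI_le => k.
  have hcs := CS (colv U k) (colv V k).
  rewrite !orth_col // eqxx in hcs.
  have := hd k; nra.
Qed.

End SVD2.

Section Rank.
Variable q : nat.
Implicit Types x y z : vec q.
Implicit Types A W Y U V : mat q.
Implicit Types d : vec q.

Lemma svd_rank1 Y U V d : svd Y U V d -> sumI d = maxI d -> rank_le1 Y.
Proof.
move=> hs heq; have [hU [hV [hd hY]]] := hs.
case: (maxI_cases d) => [h0 | [k hk]].
- have hz := sumI_zero_nonneg hd (eq_trans heq h0).
  exists (fun _ => 0) => j; exists 0 => i; rewrite hY.
  rewrite (sumI_ext (G := fun _ => 0)) ?sumI_0; first ring.
  move=> l; rewrite hz; ring.
- have hrest : forall l, l != k -> d l = 0.
    have h := sumI_split d k; rewrite heq hk in h.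
    have hz : sumI (fun l => if l == k then 0 else d l) = 0 by lra.
    have hnn : forall m, 0 <= (if m == k then 0 else d m).
      by move=> m; case: (m == k); [lra | exact: hd].
    move=> l hl; have := sumI_zero_nonneg hnn hz l; rewrite (negbTE hl); done.
  exists (colv U k) => j; exists (d k * V j k) => i; rewrite hY.
  rewrite (sumI_split _ k).
  rewrite (sumI_ext (G := fun _ => 0)) ?sumI_0.
    rewrite /colv; ring.
  move=> l; case: eqP => [//|/eqP hl]; rewrite hrest //; ring.
Qed.

Lemma svd_mv Y U V d k i : svd Y U V d ->
  mv Y (colv V k) i = d k * U i k.
Proof.
move=> hs; have [hU [hV [hd hY]]] := hs.
rewrite /mv.
transitivity (sumI (fun l => U i l * d l * dot (colv V l) (colv V k))).
  rewrite (sumI_ext (G := fun j => sumI (fun l => U i l * d l * V j l * V j k))).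
    rewrite sumI_swap; apply: sumI_ext => l; rewrite /dot -sumI_scal.
    apply: sumI_ext => j; rewrite /colv; ring.
  move=> j; rewrite hY -sumI_scalr //.
rewrite (sumI_ext (G := fun l => (if l == k then 1 else 0) * (d l * U i l))) ?sumI_delta //.
move=> l; rewrite orth_col //; case: (l == k); ring.
Qed.

Lemma rank1_svd Y U V d : svd Y U V d -> rank_le1 Y -> sumI d = maxI d.
Proof.
move=> hs [u hu]; have [hU [hV [hd hY]]] := hs.
have [c hc] := fin_all_exists hu.
set g := fun k => sumI (fun j => c j * V j k).
have hmv : forall k i, d k * U i k = g k * u i.
  move=> k i; rewrite -(svd_mv _ _ hs) /mv /g -sumI_scalr.
  apply: sumI_ext => j; rewrite hc /colv; ring.
have hdd : forall k l, d k * d l * dot (colv U k) (colv U l) = g k * g l * dot u u.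
  move=> k l; rewrite /dot -(sumI_scal (d k * d l)) -(sumI_scal (g k * g l)); apply: sumI_ext => i.
  have := hmv k i; have := hmv l i; rewrite /colv => h1 h2.
  transitivity ((d k * U i k) * (d l * U i l)); first ring.
  rewrite h1 h2; ring.
have hone : forall k l, k != l -> d k = 0 \/ d l = 0.
  move=> k l hkl.
  have h1 := hdd k k; have h2 := hdd l l; have h3 := hdd k l.
  rewrite orth_col // eqxx in h1; rewrite orth_col // eqxx in h2; rewrite orth_col // (negbTE hkl) in h3.
  have hu0 := dot_nonneg u.
  case: (Req_dec (d k) 0) => hk; first by left.
  case: (Req_dec (d l) 0) => hl; first by right.
  exfalso.
  have e1 : 0 < g k * g k * dot u u by have := Rsqr_pos_lt _ hk; rewrite /Rsqr; lra.
  have e2 : 0 < g l * g l * dot u u by have := Rsqr_pos_lt _ hl; rewrite /Rsqr; lra.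
  have e3 : g k * g l * dot u u = 0 by lra.
  have : (g k * g k * dot u u) * (g l * g l * dot u u) = (g k * g l * dot u u) * (g k * g l * dot u u) by ring.
  rewrite e3 Rmult_0_l => e4.
  have := Rmult_lt_0_compat _ _ e1 e2; lra.
apply: Rle_antisym; last exact: maxI_le_sum.
have [hm0 hm] := maxI_ge hd.
case: (Classical_Prop.classic (exists k, d k <> 0)) => [[k hk] | hn].
- rewrite (sumI_split _ k).
  rewrite (sumI_ext (G := fun _ => 0)) ?sumI_0.
    have := hm k; lra.
  move=> l; case: eqP => [//|/eqP hl].
  have := hone k l; rewrite eq_sym hl => /(_ isT) [//|->] //.
- rewrite (sumI_ext (G := fun _ => 0)) ?sumI_0 // => l.
  apply: Classical_Prop.NNPP => hl; apply: hn; exists l; exact hl.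
Qed.

End Rank.

Section Seq.

Definition incr (phi : nat -> nat) := forall n, (phi n < phi n.+1)%nat.

Lemma incr_ge phi : incr phi -> forall n, (n <= phi n)%nat.
Proof.
move=> h; elim => [//|n IH]; exact: leq_ltn_trans IH (h n).
Qed.

Lemma incr_mono phi : incr phi -> forall m n, (m < n)%nat -> (phi m < phi n)%nat.
Proof.
move=> h m; elim => [//|n IH]; rewrite ltnS leq_eqVlt => /orP [/eqP -> | hmn].
- exact: h.
- exact: ltn_trans (IH hmn) (h n).
Qed.

Lemma incr_comp phi psi : incr phi -> incr psi -> incr (fun n => phi (psi n)).
Proof. move=> h1 h2 n; apply: incr_mono => //; exact: h2. Qed.

Lemma cv_sub u l phi : incr phi -> Un_cv u l -> Un_cv (fun n => u (phi n)) l.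
Proof.
move=> hp hu e he; have [N hN] := hu e he; exists N => n hn.
apply: hN; apply/leP; apply: leq_trans (incr_ge hp n); exact/leP.
Qed.

Lemma inv_small e : 0 < e -> exists N : nat, forall n, (N <= n)%nat -> / (INR n + 1) < e.
Proof.
move=> he; have [N hN] := INR_archimed e 1 he.
exists N => n hn.
have hNn : INR N <= INR n by apply: le_INR; exact/leP.
have hpos : 0 < INR n + 1 by have := pos_INR n; lra.
apply: (Rmult_lt_reg_l (INR n + 1)) => //; rewrite Rinv_r; [|lra].
nra.
Qed.

Lemma bw1 (u : nat -> R) M : (forall n, Rabs (u n) <= M) ->
  exists phi, incr phi /\ exists l, Un_cv (fun n => u (phi n)) l.
Proof.
move=> hM.
have [l hl] : exists l, ValAdh u l.
  apply: (Bolzano_Weierstrass u (fun c => - M <= c <= M)); first exact: compact_P3.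
  move=> n; have := hM n; move=> h.
  have := Rle_abs (u n); have := Rle_abs (- u n); rewrite Rabs_Ropp; lra.
have hsel : forall N k, exists p, (N <= p)%nat /\ Rabs (u p - l) < / (INR k + 1).
  move=> N k.
  have hk : 0 < / (INR k + 1) by apply: Rinv_0_lt_compat; have := pos_INR k; lra.
  have [p [hp1 hp2]] := hl (disc l (mkposreal _ hk)) N
     (ex_intro _ (mkposreal _ hk) (fun x hx => hx)).
  exists p; split; [exact/leP | exact: hp2].
pose sel N k := epsilon (inhabits 0%nat)
   (fun p => (N <= p)%nat /\ Rabs (u p - l) < / (INR k + 1)).
have hsel' : forall N k, (N <= sel N k)%nat /\ Rabs (u (sel N k) - l) < / (INR k + 1).
  move=> N k; exact: (epsilon_spec (inhabits 0%nat) _ (hsel N k)).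
pose fix phi n := match n with 0 => sel 0%nat 0%nat | S m => sel (phi m).+1 n end.
exists phi; split.
  move=> n /=; exact: (proj1 (hsel' _ _)).
exists l => e he.
have [N hN] := inv_small he.
exists N => n hn; rewrite /R_dist.
have h : Rabs (u (phi n) - l) < / (INR n + 1).
  by case: n hn => [|m] _ /=; exact: (proj2 (hsel' _ _)).
apply: Rlt_trans h _; apply: hN; exact/leP.
Qed.

Lemma bw_fin (T : finType) (s : nat -> T -> R) M :
  (forall n t, Rabs (s n t) <= M) ->
  exists phi, incr phi /\ exists l : T -> R, forall t, Un_cv (fun n => s (phi n) t) (l t).
Proof.
move=> hM.
suff : forall r : seq T, exists phi, incr phi /\ exists l : T -> R,
    forall t, t \in r -> Un_cv (fun n => s (phi n) t) (l t).
  move=> /(_ (enum T)) [phi [hp [l hl]]]; exists phi; split => //; exists l => t.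
  by apply: hl; rewrite mem_enum.
elim => [|t0 r [phi [hp [l hl]]]].
- by exists id; split => //; exists (fun _ => 0).
- have [psi [hpsi [l0 hl0]]] := @bw1 (fun n => s (phi n) t0) M (fun n => hM (phi n) t0).
  exists (fun n => phi (psi n)); split; first exact: incr_comp.
  exists (fun t => if t == t0 then l0 else l t) => t.
  rewrite in_cons; case: eqP => [-> _ | _ /= ht]; first exact: hl0.
  exact: (cv_sub (u := fun n => s (phi n) t)) (hl t ht).
Qed.

End Seq.

Section Spectral.
Variable q : nat.
Variable A : mat q.
Hypothesis hA : is_sym A.
Implicit Types x y z v : vec q.

Definition ortho_fam k (u : nat -> vec q) :=
  forall i j, (i < k)%nat -> (j < k)%nat -> dot (u i) (u j) = if i == j then 1 else 0.
Definition eig_fam k (u : nat -> vec q) (lam : nat -> R) :=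
  forall i, (i < k)%nat -> forall r, mv A (u i) r = lam i * u i r.

Lemma dot_scal c x y : dot (fun i => c * x i) y = c * dot x y.
Proof. rewrite /dot -sumI_scal; apply: sumI_ext => i; ring. Qed.

Lemma bil_scal c x : bil A (fun i => c * x i) (fun i => c * x i) = c * c * bil A x x.
Proof.
rewrite /bil -sumI_scal; apply: sumI_ext => i; rewrite -sumI_scal.
apply: sumI_ext => j; ring.
Qed.

Lemma normalize v : 0 < dot v v ->
  dot (fun i => / sqrt (dot v v) * v i) (fun i => / sqrt (dot v v) * v i) = 1.
Proof.
move=> hv; rewrite dot_scal dot_comm dot_scal.
have hs := sqrt_sqrt _ (Rlt_le _ _ hv).
have hs0 : 0 < sqrt (dot v v) by apply: sqrt_lt_R0.
rewrite -Rmult_assoc -Rinv_mult hs Rinv_l //; lra.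
Qed.

Lemma dot_pos_of v j : v j <> 0 -> 0 < dot v v.
Proof.
move=> hj; rewrite /dot (sumI_split _ j).
have : 0 <= sumI (fun k => if k == j then 0 else v k * v k).
  apply: sumI_nonneg => k; case: (k == j); [lra | nra].
have : 0 < v j * v j by have := Rsqr_pos_lt _ hj; rewrite /Rsqr.
lra.
Qed.

Lemma bil_le_norm x : dot x x = 1 -> bil A x x <= inner A A + 1.
Proof.
move=> hx; have := bil_bound A x x; rewrite hx.
have := dot_nonneg (fun i => 0); have : 0 <= inner A A.
  apply: sumI_nonneg => i; apply: sumI_nonneg => j; nra.
move=> h0 _ h; nra.
Qed.

Lemma coord_le1 x i : dot x x = 1 -> Rabs (x i) <= 1.
Proof.
move=> hx.
have : x i * x i <= 1.
  rewrite -hx /dot (sumI_split _ i).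
  have : 0 <= sumI (fun k => if k == i then 0 else x k * x k).
    apply: sumI_nonneg => k; case: (k == i); [lra | nra].
  lra.
move=> h; rewrite -[1]Rabs_R1; apply: Rsqr_le_abs_0; rewrite /Rsqr; lra.
Qed.

Lemma dot_cv (xs : nat -> vec q) xb y : (forall i, Un_cv (fun n => xs n i) (xb i)) ->
  Un_cv (fun n => dot (xs n) y) (dot xb y).
Proof.
move=> h; apply: (sumI_cv (F := fun n i => xs n i * y i)) => i.
apply: CV_mult => //; move=> e he; exists 0%nat => n _; rewrite /R_dist Rminus_diag Rabs_R0 //.
Qed.

Lemma dot_cv2 (xs : nat -> vec q) xb : (forall i, Un_cv (fun n => xs n i) (xb i)) ->
  Un_cv (fun n => dot (xs n) (xs n)) (dot xb xb).
Proof.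
move=> h; apply: (sumI_cv (F := fun n i => xs n i * xs n i)) => i.
exact: CV_mult.
Qed.

Lemma cst_cv c : Un_cv (fun _ => c) c.
Proof. move=> e he; exists 0%nat => n _; rewrite /R_dist Rminus_diag Rabs_R0 //. Qed.

Lemma bil_cv (xs : nat -> vec q) xb : (forall i, Un_cv (fun n => xs n i) (xb i)) ->
  Un_cv (fun n => bil A (xs n) (xs n)) (bil A xb xb).
Proof.
move=> h; apply: (sumI_cv (F := fun n i => sumI (fun j => xs n i * A i j * xs n j))) => i.
apply: (sumI_cv (F := fun n j => xs n i * A i j * xs n j)) => j.
apply: CV_mult => //; apply: CV_mult => //; exact: cst_cv.
Qed.

Section Step.
Variable k : nat.
Variable u : nat -> vec q.
Variable lam : nat -> R.
Hypothesis hk : (k < q)%nat.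
Hypothesis ho : ortho_fam k u.
Hypothesis he : eig_fam k u lam.

Definition adm x := dot x x = 1 /\ forall i, (i < k)%nat -> dot x (u i) = 0.

Lemma adm_ex : exists x, adm x.
Proof.
have [v [hv [j hj]]] := orth_exists u hk.
have hp := dot_pos_of hj.
exists (fun i => / sqrt (dot v v) * v i); split; first exact: normalize.
move=> i hi; rewrite dot_scal; rewrite /dot hv //; ring.
Qed.

Lemma max_ex : exists xb, adm xb /\ forall x, adm x -> bil A x x <= bil A xb xb.
Proof.
pose E r := exists x, adm x /\ r = bil A x x.
have hb : bound E.
  exists (inner A A + 1) => r [x [[hx _] ->]]; exact: bil_le_norm.
have hE : exists r, E r by have [x hx] := adm_ex; exists (bil A x x), x.
have [m [hm1 hm2]] := completeness E hb hE.
have happ : forall n : nat, exists x, adm x /\ m - / (INR n + 1) < bil A x x.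
  move=> n; apply: Classical_Prop.NNPP => hn.
  have hpos : 0 < / (INR n + 1) by apply: Rinv_0_lt_compat; have := pos_INR n; lra.
  have : m <= m - / (INR n + 1); last lra.
  apply: hm2 => r [x [hx ->]]; apply: Rnot_lt_le => hlt; apply: hn; exists x; split => //.
pose xs n := epsilon (inhabits (fun _ : 'I_q => 0))
   (fun x => adm x /\ m - / (INR n + 1) < bil A x x).
have hxs : forall n, adm (xs n) /\ m - / (INR n + 1) < bil A (xs n) (xs n).
  move=> n; exact: (epsilon_spec (inhabits (fun _ : 'I_q => 0)) _ (happ n)).
have hbd : forall n i, Rabs (xs n i) <= 1.
  move=> n i; apply: coord_le1; exact: (proj1 (proj1 (hxs n))).
have [phi [hphi [xb hxb]]] := bw_fin hbd.
have hcv := bil_cv hxb.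
have hup : bil A xb xb <= m.
  apply: (Rle_cv_lim (Un := fun n => bil A (xs (phi n)) (xs (phi n))) (Vn := fun _ => m)) => //.
  - move=> n; apply: hm1; exists (xs (phi n)); split => //; exact: (proj1 (hxs _)).
  - exact: cst_cv.
have hlow : m <= bil A xb xb.
  apply: (Rle_cv_lim (Un := fun n => m - / (INR (phi n) + 1))
     (Vn := fun n => bil A (xs (phi n)) (xs (phi n)))) => //.
  - move=> n; have := proj2 (hxs (phi n)); lra.
  - move=> e he'; have [N hN] := inv_small he'; exists N => n hn; rewrite /R_dist.
    have hpos : 0 < / (INR (phi n) + 1) by apply: Rinv_0_lt_compat; have := pos_INR (phi n); lra.
    rewrite (_ : m - / (INR (phi n) + 1) - m = - / (INR (phi n) + 1)); last ring.
    rewrite Rabs_Ropp Rabs_pos_eq; last lra.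
    apply: hN; apply: leq_trans (incr_ge hphi n); exact/leP.
have hadm : adm xb.
  split.
  - apply: (UL_sequence (fun n => dot (xs (phi n)) (xs (phi n)))); first exact: dot_cv2.
    rewrite (_ : (fun n => dot (xs (phi n)) (xs (phi n))) = fun _ => 1); first exact: cst_cv.
    apply: functional_extensionality => n; exact: (proj1 (proj1 (hxs _))).
  - move=> i hi.
    apply: (UL_sequence (fun n => dot (xs (phi n)) (u i))); first exact: dot_cv.
    rewrite (_ : (fun n => dot (xs (phi n)) (u i)) = fun _ => 0); first exact: cst_cv.
    apply: functional_extensionality => n; exact: (proj2 (proj1 (hxs _)) i hi).
exists xb; split => // x hx.
have : bil A x x <= m by apply: hm1; exists x.
lra.
Qed.

Lemma step_ex : exists x m, adm x /\ forall r, mv A x r = m * x r.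
Proof.
have [xb [[hx1 hx2] hmax]] := max_ex.
set m := bil A xb xb.
have hhom : forall z, (forall i, (i < k)%nat -> dot z (u i) = 0) -> 0 < dot z z ->
    bil A z z <= m * dot z z.
  move=> z hz hzp.
  set c := / sqrt (dot z z).
  have hadm : adm (fun i => c * z i).
    split; first exact: normalize.
    move=> i hi; rewrite dot_scal hz //; ring.
  have := hmax _ hadm; rewrite bil_scal -/m.
  have hcc : c * c = / dot z z.
    rewrite /c -Rinv_mult sqrt_sqrt //; lra.
  rewrite hcc => h.
  have := Rmult_le_compat_l (dot z z) _ _ (Rlt_le _ _ hzp) h.
  rewrite -Rmult_assoc Rinv_r; last lra.
  lra.
have hlag : forall y, (forall i, (i < k)%nat -> dot y (u i) = 0) -> dot y xb = 0 ->
    bil A y xb = 0.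
  move=> y hy hyx.
  set a := bil A y xb.
  set b := bil A y y.
  set c := dot y y.
  have hc : 0 <= c := dot_nonneg y.
  have key : forall t, 2 * t * a <= t * t * (m * c - b).
    move=> t.
    pose z := fun i => 1 * xb i + t * y i.
    have hz : forall i, (i < k)%nat -> dot z (u i) = 0.
      move=> i hi; rewrite /z (dot_lin 1 t xb y (u i)) hx2 // hy //; ring.
    have hzz : dot z z = 1 + t * t * c.
      rewrite /z dot_lin (dot_comm xb) (dot_comm y) !dot_lin hx1 hyx (dot_comm xb y) hyx.
      rewrite /c; ring.
    have hzp : 0 < dot z z by rewrite hzz; have := Rmult_le_pos _ _ (Rle_0_sqr t) hc; rewrite /Rsqr; lra.
    have hb := hhom z hz hzp.
    have hbz : bil A z z = m + 2 * t * a + t * t * b.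
      rewrite /z bil_lin_l !bil_lin_r (@bil_sym _ A xb y hA) -/m -/a -/b; ring.
    rewrite hbz hzz in hb; nra.
  set K := Rabs (m * c - b) + 1.
  have hK : 0 < K by have := Rabs_pos (m * c - b); rewrite /K; lra.
  have hK2 : m * c - b <= K - 1 by have := Rle_abs (m * c - b); rewrite /K; lra.
  have := key (a / K).
  move=> h.
  have h' : 2 * a * a * K <= a * a * (m * c - b).
    have e : 2 * (a / K) * a * (K * K) = 2 * a * a * K by field; lra.
    have e' : (a / K) * (a / K) * (m * c - b) * (K * K) = a * a * (m * c - b) by field; lra.
    have hKK : 0 < K * K by nra.
    rewrite -e -e'; apply: Rmult_le_compat_r => //; lra.
  have : a * a * (m * c - b) <= a * a * (K - 1).
    apply: Rmult_le_compat_l => //; nra.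
  move=> h2.
  have : a * a * (K + 1) <= 0 by lra.
  have : 0 <= a * a by nra.
  move=> ha h3.
  have : a * a = 0 by nra.
  move=> h4; nra.
exists xb, m; split; first by split.
pose z := fun r => mv A xb r - m * xb r.
have hzu : forall i, (i < k)%nat -> dot z (u i) = 0.
  move=> i hi.
  rewrite /z (_ : (fun r => mv A xb r - m * xb r) = fun r => 1 * mv A xb r + (- m) * xb r);
    last by apply: functional_extensionality => r; ring.
  rewrite dot_lin hx2 // mv_sym //.
  rewrite (_ : mv A (u i) = fun r => lam i * u i r);
    last by apply: functional_extensionality => r; exact: he.
  rewrite dot_comm dot_scal dot_comm hx2 //; ring.
have hzx : dot z xb = 0.
  rewrite /z (_ : (fun r => mv A xb r - m * xb r) = fun r => 1 * mv A xb r + (- m) * xb r);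
    last by apply: functional_extensionality => r; ring.
  rewrite dot_lin hx1 dot_comm -bil_dot -/m; ring.
have h0 := hlag z hzu hzx.
have hzz : dot z z = 0.
  rewrite bil_dot in h0.
  have e : dot z (mv A xb) = dot z z + m * dot z xb.
    rewrite /dot -sumI_scal -sumI_add; apply: sumI_ext => r; rewrite /z; ring.
  rewrite hzx in e; lra.
move=> r; have := dot_zero hzz r; rewrite /z; lra.
Qed.

End Step.

Lemma eig_all k : (k <= q)%nat -> exists u lam, ortho_fam k u /\ eig_fam k u lam.
Proof.
elim: k => [_ | k IH hk].
- by exists (fun _ _ => 0), (fun _ => 0); split.
- have [u [lam [ho he]]] := IH (ltnW hk).
  have [x [m [[hx1 hx2] hxe]]] := step_ex hk he.
  exists (fun i => if i == k then x else u i), (fun i => if i == k then m else lam i).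
  split.
  + move=> i j hi hj; rewrite ltnS leq_eqVlt in hi; rewrite ltnS leq_eqVlt in hj.
    case: eqP => [-> | hik]; case: eqP => [-> | hjk].
    * by rewrite eqxx.
    * have hj' : (j < k)%nat by case/orP: hj => [/eqP // | //].
      rewrite hx2 //; case: eqP => // hkj; exfalso; exact: hjk (esym hkj).
    * have hi' : (i < k)%nat by case/orP: hi => [/eqP // | //].
      rewrite dot_comm hx2 //; case: eqP => //.
    * have hi' : (i < k)%nat by case/orP: hi => [/eqP // | //].
      have hj' : (j < k)%nat by case/orP: hj => [/eqP // | //].
      exact: ho.
  + move=> i hi r; case: eqP => [_ | hik]; first exact: hxe.
    apply: he; rewrite ltnS leq_eqVlt in hi.
    by case/orP: hi => [/eqP // | //].
Qed.

End Spectral.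

Lemma spectral q (A : mat q) : is_sym A ->
  exists U d, orthogonal U /\ (forall k r, mv A (colv U k) r = d k * U r k)
     /\ forall i j, A i j = sumI (fun k => U i k * d k * U j k).
Proof.
move=> hA.
have [u [lam [ho he]]] := eig_all hA (leqnn q).
pose U : mat q := fun r c => u (nat_of_ord c) r.
pose d : vec q := fun c => lam (nat_of_ord c).
have hU : orthogonal U.
  move=> i j; rewrite -(val_eqE i j); exact: ho.
have hev : forall k r, mv A (colv U k) r = d k * U r k.
  move=> k r; exact: he.
exists U, d; split => //; split => // i j.
have hc := complete_orth hU.
transitivity (sumI (fun l => A i l * (if l == j then 1 else 0))).
  rewrite (sumI_ext (G := fun l => (if l == j then 1 else 0) * A i l)) ?sumI_delta //.
  move=> l; ring.
transitivity (sumI (fun l => sumI (fun k => A i l * U l k * U j k))).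
  apply: sumI_ext => l; rewrite -hc -sumI_scal; apply: sumI_ext => k; ring.
rewrite sumI_swap; apply: sumI_ext => k.
transitivity (mv A (colv U k) i * U j k).
  rewrite /mv -sumI_scalr //.
rewrite hev; ring.
Qed.

Lemma psd_svd q (Y : mat q) : psd Y -> exists U d, svd Y U U d.
Proof.
move=> [hs hp].
have [U [d [hU [hev hY]]]] := spectral hs.
exists U, d; split => //; split => //; split => // k.
have := hp (colv U k); rewrite -/(bil Y _ _) bil_dot.
rewrite (_ : mv Y (colv U k) = fun r => d k * colv U k r);
  last by apply: functional_extensionality => r; exact: hev.
rewrite dot_comm dot_scal orth_col // eqxx; lra.
Qed.

Section Norms.
Variable q : nat.
Implicit Types Y Z : mat q.

Lemma norms_psd Y : psd Y -> exists U V d, svd Y U V d /\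
  nuclear_norm Y = sumI d /\ spectral_norm Y = maxI d.
Proof.
move=> hY; have [U [d hs]] := psd_svd hY.
exists U, U, d; split => //; split.
- have ex : exists s, exists U V d, svd Y U V d /\ s = sumI d by exists (sumI d), U, U, d.
  rewrite /nuclear_norm /spectral_norm; have [U1 [V1 [d1 [hs1 ->]]]] := epsilon_spec (inhabits R0) _ ex.
  by rewrite (svd_trace hs1 hY) (svd_trace hs hY).
- have ex : exists s, exists U V d, svd Y U V d /\ s = maxI d by exists (maxI d), U, U, d.
  rewrite /nuclear_norm /spectral_norm; have [U1 [V1 [d1 [hs1 ->]]]] := epsilon_spec (inhabits R0) _ ex.
  exact: spec_unique hs1 hs.
Qed.

Definition hgap Y := nuclear_norm Y - spectral_norm Y.

Lemma nuc_trace Y : psd Y -> nuclear_norm Y = trace Y.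
Proof.
move=> hY; have [U [V [d [hs [-> _]]]]] := norms_psd hY; exact: svd_trace hs hY.
Qed.

Lemma hgap_nonneg Y : psd Y -> 0 <= hgap Y.
Proof.
move=> hY; have [U [V [d [hs [h1 h2]]]]] := norms_psd hY.
have [_ [_ [hd _]]] := hs.
rewrite /hgap h1 h2; have := maxI_le_sum hd; lra.
Qed.

Lemma hgap_zero Y : psd Y -> (hgap Y = 0 <-> rank_le1 Y).
Proof.
move=> hY; have [U [V [d [hs [h1 h2]]]]] := norms_psd hY.
rewrite /hgap h1 h2; split.
- move=> h; apply: (svd_rank1 hs); lra.
- move=> h; rewrite (rank1_svd hs h); ring.
Qed.

Lemma spec_lip' Y Z t : psd Y -> psd Z -> 0 <= t ->
  inner (fun i j => Y i j - Z i j) (fun i j => Y i j - Z i j) <= t * t ->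
  spectral_norm Y - spectral_norm Z <= t.
Proof.
move=> hY hZ ht hW.
have [U [V [d [hs [_ ->]]]]] := norms_psd hY.
have [U' [V' [d' [hs' [_ ->]]]]] := norms_psd hZ.
exact: spec_lip hs hs' ht hW.
Qed.

End Norms.

Section Main.
Variable q : nat.
Implicit Types Y Z W : mat q.

Lemma sq_le_inner W i j : W i j * W i j <= inner W W.
Proof.
rewrite /inner (sumI_split _ i) (sumI_split (fun j0 => W i j0 * W i j0) j).
have : 0 <= sumI (fun k => if k == j then 0 else W i k * W i k).
  apply: sumI_nonneg => k; case: (k == j); [lra | nra].
have : 0 <= sumI (fun k => if k == i then 0 else sumI (fun j0 => W k j0 * W k j0)).
  apply: sumI_nonneg => k; case: (k == i); first lra.
  apply: sumI_nonneg => l; nra.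
lra.
Qed.

Lemma inner_nonneg W : 0 <= inner W W.
Proof. apply: sumI_nonneg => i; apply: sumI_nonneg => j; nra. Qed.

Lemma coord_frob W i j : Rabs (W i j) <= frob W.
Proof.
rewrite -sqrt_Rsqr_abs /frob; apply: sqrt_le_1_alt; rewrite /Rsqr; exact: sq_le_inner.
Qed.

Lemma frob_le_sq W t : 0 <= t -> inner W W <= t * t -> frob W <= t.
Proof.
move=> ht h; rewrite /frob -(sqrt_square t) //; exact: sqrt_le_1_alt.
Qed.

Lemma inner_le_of_frob W M : frob W <= M -> inner W W <= M * M.
Proof.
move=> h; have h0 : 0 <= frob W by apply: sqrt_pos.
have := sqrt_sqrt _ (inner_nonneg W); rewrite -/(frob W) => <-; nra.
Qed.

Lemma frob_sub_le Y Z M : frob Y <= M -> frob Z <= M -> frob (madd Y (mopp Z)) <= 2 * M.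
Proof.
move=> hY hZ.
have hM : 0 <= M by have := sqrt_pos (inner Y Y); rewrite -/(frob Y); lra.
apply: frob_le_sq; first lra.
have h1 := inner_le_of_frob hY; have h2 := inner_le_of_frob hZ.
have : inner (madd Y (mopp Z)) (madd Y (mopp Z)) <= 2 * inner Y Y + 2 * inner Z Z.
  rewrite /inner -!sumI_scal -sumI_add; apply: sumI_le => i.
  rewrite -!sumI_scal -sumI_add; apply: sumI_le => j.
  rewrite /madd /mopp.
  have := Rle_0_sqr (Y i j + Z i j); rewrite /Rsqr; lra.
lra.
Qed.

Definition Kc (C : mat q) := sumI (fun i => sumI (fun j => Rabs (C i j))).

Lemma Kc_nonneg C : 0 <= Kc C.
Proof. apply: sumI_nonneg => i; apply: sumI_nonneg => j; exact: Rabs_pos. Qed.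

Lemma inner_lip C Y Z : inner C Z - inner C Y <= Kc C * frob (madd Y (mopp Z)).
Proof.
rewrite /inner -sumI_sub /Kc -sumI_scalr; apply: sumI_le => i.
rewrite -sumI_sub -sumI_scalr; apply: sumI_le => j.
have h := coord_frob (madd Y (mopp Z)) i j.
rewrite /madd /mopp in h.
have e : C i j * Z i j - C i j * Y i j = - (C i j * (Y i j + - Z i j)) by ring.
rewrite e; apply: Rle_trans (Rle_abs _) _; rewrite Rabs_Ropp Rabs_mult.
apply: Rmult_le_compat_l => //; exact: Rabs_pos.
Qed.

Definition mcv (Ys : nat -> mat q) (Yb : mat q) := forall i j, Un_cv (fun n => Ys n i j) (Yb i j).

Lemma mcv_sub Ys Yb : mcv Ys Yb -> forall i j, Un_cv (fun n => Ys n i j - Yb i j) 0.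
Proof.
move=> h i j; rewrite -(Rminus_diag (Yb i j)); apply: CV_minus => //; exact: cst_cv.
Qed.

Lemma mcv_sub' Ys Yb : mcv Ys Yb -> forall i j, Un_cv (fun n => Yb i j - Ys n i j) 0.
Proof.
move=> h i j; rewrite -(Rminus_diag (Yb i j)); apply: CV_minus => //; exact: cst_cv.
Qed.

Lemma inner_cv0 (Ws : nat -> mat q) : (forall i j, Un_cv (fun n => Ws n i j) 0) ->
  Un_cv (fun n => inner (Ws n) (Ws n)) 0.
Proof.
move=> h.
have -> : 0 = inner (fun _ _ => 0) (fun _ _ : 'I_q => 0).
  rewrite /inner (sumI_ext (G := fun _ => 0)) ?sumI_0 // => i.
  rewrite (sumI_ext (G := fun _ => 0)) ?sumI_0 // => j; ring.
apply: (sumI_cv (F := fun n i => sumI (fun j => Ws n i j * Ws n i j))) => i.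
apply: (sumI_cv (F := fun n j => Ws n i j * Ws n i j)) => j.
exact: CV_mult.
Qed.

Lemma ev_le (u : nat -> R) e : Un_cv u 0 -> 0 < e -> exists N, forall n, (N <= n)%nat -> u n <= e.
Proof.
move=> h he; have [N hN] := h e he; exists N => n hn.
have := hN n (elimT leP hn); rewrite /R_dist Rminus_0_r => h'.
have := Rle_abs (u n); lra.
Qed.

Lemma hgap_cv Ys Yb : (forall n, psd (Ys n)) -> psd Yb -> mcv Ys Yb ->
  Un_cv (fun n => hgap (Ys n)) (hgap Yb).
Proof.
move=> hYs hYb hc.
rewrite /hgap.
apply: CV_minus.
- rewrite (_ : (fun n => nuclear_norm (Ys n)) = fun n => trace (Ys n));
    last by apply: functional_extensionality => n; exact: nuc_trace.
  rewrite nuc_trace //.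
  apply: (sumI_cv (F := fun n i => Ys n i i)) => i; exact: hc.
- move=> e he.
  have he2 : 0 < (e / 2) * (e / 2) by nra.
  have [N1 hN1] := ev_le (inner_cv0 (mcv_sub hc)) he2.
  have [N2 hN2] := ev_le (inner_cv0 (mcv_sub' hc)) he2.
  exists (N1 + N2)%nat => n hn; rewrite /R_dist.
  have hn1 : (N1 <= n)%nat := leq_trans (leq_addr _ _) (introT leP hn).
  have hn2 : (N2 <= n)%nat := leq_trans (leq_addl _ _) (introT leP hn).
  have h1 := spec_lip' (hYs n) hYb (Rlt_le _ _ (Rdiv_lt_0_compat _ _ he Rlt_0_2)) (hN1 n hn1).
  have h2 := spec_lip' hYb (hYs n) (Rlt_le _ _ (Rdiv_lt_0_compat _ _ he Rlt_0_2)) (hN2 n hn2).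
  apply: Rabs_def1; lra.
Qed.

End Main.

Section Closed.
Variable q m : nat.
Variable Amap : mat q -> vec m.
Hypothesis hA : linear_on_sym Amap.
Implicit Types Y Z W : mat q.

Lemma amap0 k : Amap (fun _ _ => 0) k = 0.
Proof.
have hs : is_sym (fun _ _ : 'I_q => 0) by [].
have := hA 0 0 hs hs k.
rewrite (_ : madd (mscale 0 (fun _ _ : 'I_q => 0)) (mscale 0 (fun _ _ : 'I_q => 0)) = fun _ _ => 0).
  move=> ->; ring.
apply: functional_extensionality => a; apply: functional_extensionality => b.
rewrite /madd /mscale; ring.
Qed.

Lemma amap_big (I : Type) (r : seq I) (G : I -> mat q) (c : I -> R) :
  (forall p, is_sym (G p)) -> forall k,
  Amap (fun a b => \big[Rplus/0]_(p <- r) (c p * G p a b)) k =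
  \big[Rplus/0]_(p <- r) (c p * Amap (G p) k).
Proof.
move=> hG k; elim: r => [|p r IH].
- rewrite big_nil (_ : (fun a b => \big[Rplus/0]_(p <- [::]) (c p * G p a b)) = fun _ _ => 0).
    exact: amap0.
  apply: functional_extensionality => a; apply: functional_extensionality => b.
  by rewrite big_nil.
- set Rest := fun a b => \big[Rplus/0]_(p0 <- r) (c p0 * G p0 a b).
  have hR : is_sym Rest.
    move=> a b; rewrite /Rest; apply: eq_bigr => p0 _; rewrite hG //.
  rewrite (_ : (fun a b => \big[Rplus/0]_(p0 <- p :: r) (c p0 * G p0 a b)) =
     madd (mscale (c p) (G p)) (mscale 1 Rest)).
    rewrite hA // big_cons IH; ring.
  apply: functional_extensionality => a; apply: functional_extensionality => b.
  rewrite big_cons /madd /mscale /Rest; ring.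
Qed.

Definition dl (a i : 'I_q) : R := if a == i then 1 else 0.

Definition Fb (i j : 'I_q) : mat q := fun a b => (dl a i * dl b j + dl a j * dl b i) / 2.

Lemma Fb_sym i j : is_sym (Fb i j).
Proof. move=> a b; rewrite /Fb; field. Qed.

Lemma sym_expand W : is_sym W -> forall a b,
  W a b = sumI (fun i => sumI (fun j => W i j * Fb i j a b)).
Proof.
move=> hW a b.
transitivity (sumI (fun i => sumI (fun j => (/2 * W i j * dl a i) * dl b j)) +
              sumI (fun i => sumI (fun j => (/2 * W i j * dl b i) * dl a j))).
  rewrite (sumI_ext (F := fun i => sumI (fun j => (/2 * W i j * dl a i) * dl b j))
     (G := fun i => / 2 * W i b * dl a i)); last first.
    move=> i; exact: (sumI_delta' (fun j => / 2 * W i j * dl a i) b).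
  rewrite (sumI_ext (F := fun i => sumI (fun j => (/2 * W i j * dl b i) * dl a j))
     (G := fun i => / 2 * W i a * dl b i)); last first.
    move=> i; exact: (sumI_delta' (fun j => / 2 * W i j * dl b i) a).
  rewrite (sumI_delta' (fun i => / 2 * W i b) a) (sumI_delta' (fun i => / 2 * W i a) b).
  rewrite (hW b a); field.
rewrite -sumI_add; apply: sumI_ext => i; rewrite -sumI_add; apply: sumI_ext => j.
rewrite /Fb; field.
Qed.

Lemma amap_expand W : is_sym W -> forall k,
  Amap W k = sumI (fun i => sumI (fun j => W i j * Amap (Fb i j) k)).
Proof.
move=> hW k.
have e : W = fun a b => \big[Rplus/0]_(p <- index_enum (prod 'I_q 'I_q))
      (W p.1 p.2 * Fb p.1 p.2 a b).
  apply: functional_extensionality => a; apply: functional_extensionality => b.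
  rewrite (sym_expand hW a b) /sumI pair_big //=.
rewrite {1}e amap_big; last by move=> p; exact: Fb_sym.
rewrite /sumI pair_big //=.
Qed.

Lemma omega_closed b (Ys : nat -> mat q) Yb :
  (forall n, Omega Amap b (Ys n)) -> mcv Ys Yb -> Omega Amap b Yb.
Proof.
move=> hO hc.
have hsym : is_sym Yb.
  move=> i j; apply: (UL_sequence (fun n => Ys n i j)); first exact: hc.
  rewrite (_ : (fun n => Ys n i j) = fun n => Ys n j i); first exact: hc.
  apply: functional_extensionality => n; have [[hs _] _] := hO n; exact: hs.
split; [split => // | split].
- move=> x; apply: (Rle_cv_lim (Un := fun _ => 0)
     (Vn := fun n => bil (Ys n) x x)).
  + move=> n; have [[_ hp] _] := hO n; exact: hp.
  + exact: cst_cv.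
  + apply: (sumI_cv (F := fun n i => sumI (fun j => x i * Ys n i j * x j))) => i.
    apply: (sumI_cv (F := fun n j => x i * Ys n i j * x j)) => j.
    apply: CV_mult; last exact: cst_cv.
    apply: CV_mult; [exact: cst_cv | exact: hc].
- move=> i j; apply: (Rle_cv_lim (Un := fun _ => 0) (Vn := fun n => Ys n i j)).
  + move=> n; have [_ [hn _]] := hO n; exact: hn.
  + exact: cst_cv.
  + exact: hc.
- move=> k.
  have hlin : forall n, Amap Yb k - b k =
      sumI (fun i => sumI (fun j => (Yb i j - Ys n i j) * Amap (Fb i j) k)).
    move=> n; have [[hs _] [_ hb]] := hO n.
    have hsd : is_sym (fun i j => Yb i j - Ys n i j).
      by move=> i j; rewrite hsym hs.
    rewrite -(amap_expand hsd k).
    rewrite (_ : (fun i j => Yb i j - Ys n i j) = madd (mscale 1 Yb) (mscale (-1) (Ys n))).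
      rewrite hA // hb; ring.
    apply: functional_extensionality => a; apply: functional_extensionality => c.
    rewrite /madd /mscale; ring.
  have hcv : Un_cv (fun n => sumI (fun i => sumI (fun j => (Yb i j - Ys n i j) * Amap (Fb i j) k))) 0.
    have -> : 0 = sumI (fun i => sumI (fun j => 0 * Amap (Fb i j) k)).
      rewrite (sumI_ext (G := fun _ => 0)) ?sumI_0 // => i.
      rewrite (sumI_ext (G := fun _ => 0)) ?sumI_0 // => j; ring.
    apply: (sumI_cv (F := fun n i => sumI (fun j => (Yb i j - Ys n i j) * Amap (Fb i j) k))) => i.
    apply: (sumI_cv (F := fun n j => (Yb i j - Ys n i j) * Amap (Fb i j) k)) => j.
    apply: CV_mult; [exact: mcv_sub' | exact: cst_cv].
  have : Amap Yb k - b k = 0.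
    apply: (UL_sequence (fun _ => Amap Yb k - b k)); first exact: cst_cv.
    rewrite (_ : (fun _ => Amap Yb k - b k) = fun n => sumI (fun i => sumI (fun j => (Yb i j - Ys n i j) * Amap (Fb i j) k))) //.
    apply: functional_extensionality => n; exact: hlin.
  lra.
Qed.

End Closed.

Section ErrorBound.
Variable q m : nat.
Variable Amap : mat q -> vec m.
Variable b : vec m.
Hypothesis hA : linear_on_sym Amap.
Hypothesis hbdd : exists M, forall Y, Omega Amap b Y -> frob Y <= M.
Hypothesis hR : exists Y, Omega Amap b Y /\ rank_le1 Y.
Hypothesis hcalm : forall Y, Gamma Amap b 0 Y -> calm (Gamma Amap b) 0 Y.

Lemma error_bound : exists alpha, 0 < alpha /\ forall Y, Omega Amap b Y ->
  exists Z, Gamma Amap b 0 Z /\ frob (madd Y (mopp Z)) <= alpha * hgap Y.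
Proof.
apply: Classical_Prop.NNPP => hn.
have hseq : forall n : nat, exists Y, Omega Amap b Y /\ forall Z, Gamma Amap b 0 Z ->
    (INR n + 1) * hgap Y < frob (madd Y (mopp Z)).
  move=> n; apply: Classical_Prop.NNPP => hn'; apply: hn; exists (INR n + 1); split.
    have := pos_INR n; lra.
  move=> Y hY; apply: Classical_Prop.NNPP => hz; apply: hn'; exists Y; split => // Z hZ.
  apply: Rnot_le_lt => hle; apply: hz; exists Z; split => //.
pose Ys n := epsilon (inhabits (fun _ _ : 'I_q => 0)) (fun Y => Omega Amap b Y /\ forall Z, Gamma Amap b 0 Z ->
    (INR n + 1) * hgap Y < frob (madd Y (mopp Z))).
have hYs : forall n, Omega Amap b (Ys n) /\ forall Z, Gamma Amap b 0 Z ->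
    (INR n + 1) * hgap (Ys n) < frob (madd (Ys n) (mopp Z)).
  move=> n; exact: (epsilon_spec (inhabits (fun _ _ : 'I_q => 0)) _ (hseq n)).
have [M hM] := hbdd.
have [Z0 [hZ0 hr0]] := hR.
have hG0 : Gamma Amap b 0 Z0 by split => //; apply/(hgap_zero (proj1 hZ0)).
have hbd : forall n (p : 'I_q * 'I_q), Rabs (Ys n p.1 p.2) <= M.
  move=> n p; apply: Rle_trans (coord_frob _ _ _) (hM _ (proj1 (hYs n))).
have [phi [hphi [l hl]]] := bw_fin hbd.
pose Yb : mat q := fun i j => l (i, j).
have hc : mcv (fun n => Ys (phi n)) Yb by move=> i j; exact: (hl (i, j)).
have hOb : Omega Amap b Yb := omega_closed hA (fun n => proj1 (hYs (phi n))) hc.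
have hpsd : forall n, psd (Ys n) by move=> n; exact: (proj1 (proj1 (hYs n))).
have hcv := hgap_cv (fun n => hpsd (phi n)) (proj1 hOb) hc.
have hMpos : 0 <= M.
  have := hM _ hZ0; have := sqrt_pos (inner Z0 Z0); rewrite -/(frob Z0); lra.
have hgn : forall n, hgap (Ys n) * (INR n + 1) < 2 * M + 1.
  move=> n; have := proj2 (hYs n) Z0 hG0.
  have := frob_sub_le (hM _ (proj1 (hYs n))) (hM _ hZ0); lra.
have h0cv : Un_cv (fun n => hgap (Ys (phi n))) 0.
  move=> e he.
  set K := 2 * M + 1.
  have hK : 0 < K by rewrite /K; lra.
  have [N hN] := inv_small (Rdiv_lt_0_compat _ _ he hK).
  exists N => n hnn; rewrite /R_dist Rminus_0_r Rabs_pos_eq; last exact: hgap_nonneg.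
  set P := INR (phi n) + 1.
  have hP : 0 < P by rewrite /P; have := pos_INR (phi n); lra.
  have h1 : / P < e / K.
    apply: hN; apply: leq_trans (incr_ge hphi n); exact/leP.
  have h2 : K < P * e.
    have := Rmult_lt_compat_l (P * K) _ _ (Rmult_lt_0_compat _ _ hP hK) h1.
    have -> : P * K * / P = K by field; lra.
    have -> : P * K * (e / K) = P * e by field; lra.
    done.
  have h3 := hgn (phi n); rewrite -/P -/K in h3.
  have h4 : hgap (Ys (phi n)) * P < e * P by lra.
  exact: (Rmult_lt_reg_r P).
have hgb : hgap Yb = 0 := UL_sequence _ _ _ hcv h0cv.
have hGb : Gamma Amap b 0 Yb by split.
have [al [e1 [e2 [hal [he1 [he2 hcal]]]]]] := hcalm hGb.
have [N1 hN1] := ev_le h0cv he1.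
have [N2 hN2] := ev_le (inner_cv0 (mcv_sub hc)) (Rmult_lt_0_compat _ _ he2 he2).
have [N3 hN3] := INR_archimed 1 al Rlt_0_1.
pose n := (N1 + N2 + N3)%nat.
have hn1 : (N1 <= n)%nat by rewrite /n -addnA leq_addr.
have hn2 : (N2 <= n)%nat by rewrite /n -addnA (addnC N2) addnA leq_addl.
have hn3 : (N3 <= n)%nat by rewrite /n leq_addl.
set Y := Ys (phi n).
have hY0 : 0 <= hgap Y := hgap_nonneg (hpsd _).
have hx : Rabs (hgap Y - 0) <= e1.
  rewrite Rminus_0_r Rabs_pos_eq //; exact: hN1.
have hfr : frob (madd Y (mopp Yb)) <= e2.
  apply: frob_le_sq; first lra; exact: hN2.
have hG' : Gamma Amap b (hgap Y) Y by split => //; exact: (proj1 (hYs (phi n))).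
have [z' [hz' hfz]] := hcal _ _ hx hfr hG'.
have hlt := proj2 (hYs (phi n)) z' hz'.
rewrite -/Y in hlt.
have hINR : INR N3 <= INR (phi n).
  apply: le_INR; apply/leP; apply: leq_trans hn3 (incr_ge hphi n).
rewrite Rminus_0_r Rabs_pos_eq // in hfz.
have : al * hgap Y <= (INR (phi n) + 1) * hgap Y.
  apply: Rmult_le_compat_r => //; lra.
lra.
Qed.

End ErrorBound.

Theorem proposition2 (q m : nat) (Cbar : mat q) (Amap : mat q -> vec m) (b : vec m)
  (hC : is_sym Cbar) (hA : linear_on_sym Amap)
  (hne : exists Y, Omega Amap b Y)
  (hbdd : exists M, forall Y, Omega Amap b Y -> frob Y <= M)
  (hR : exists Y, Omega Amap b Y /\ rank_le1 Y)
  (hcalm : forall Y, Gamma Amap b 0 Y -> calm (Gamma Amap b) 0 Y) :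
  exists rhobar, 0 < rhobar /\
    forall rho, rho > rhobar -> forall Ystar : mat q,
      is_argmin (fun Y => Omega Amap b Y /\ rank_le1 Y) (fun Y => inner Cbar Y) Ystar <->
      is_argmin (Omega Amap b)
        (fun Y => inner Cbar Y + rho * (nuclear_norm Y - spectral_norm Y)) Ystar.
Proof.
have [al [hal heb]] := error_bound hA hbdd hR hcalm.
set K := Kc Cbar.
have hK : 0 <= K := Kc_nonneg Cbar.
exists (K * al + 1); split; first nra.
move=> rho hrho Ys; split.
- move=> [[hO hr] hmin]; split => // Y hY.
  have hs := proj1 hO.
  have h0 : hgap Ys = 0 by apply/(hgap_zero hs).
  rewrite -/(hgap Ys) -/(hgap Y) h0.
  have [Z [[hZO hZg] hZ]] := heb Y hY.
  have hZr : rank_le1 Z by apply/(hgap_zero (proj1 hZO)).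
  have h1 := hmin Z (conj hZO hZr).
  have h2 := inner_lip Cbar Y Z.
  have hY0 := hgap_nonneg (proj1 hY).
  have : K * frob (madd Y (mopp Z)) <= K * (al * hgap Y) by apply: Rmult_le_compat_l.
  move=> h3.
  have : K * al * hgap Y <= rho * hgap Y by apply: Rmult_le_compat_r => //; lra.
  rewrite -/K in h2 *; nra.
- move=> [hO hmin].
  have hs := proj1 hO.
  have [Z [[hZO hZg] hZ]] := heb Ys hO.
  have hZr : rank_le1 Z by apply/(hgap_zero (proj1 hZO)).
  have h1 := hmin Z hZO.
  have hZg' : hgap Z = 0 := hZg.
  rewrite -/(hgap Ys) -/(hgap Z) hZg' in h1.
  have h2 := inner_lip Cbar Ys Z.
  have hY0 := hgap_nonneg hs.
  have h3 : K * frob (madd Ys (mopp Z)) <= K * (al * hgap Ys) by apply: Rmult_le_compat_l.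
  rewrite -/K in h2.
  have h4 : (rho - K * al) * hgap Ys <= 0 by nra.
  have h5 : hgap Ys = 0.
    apply: Rle_antisym => //.
    have hpos : 0 < rho - K * al by lra.
    apply: (Rmult_le_reg_l (rho - K * al)) => //; lra.
  split; first by split => //; apply/(hgap_zero hs).
  move=> Y [hY hYr].
  have := hmin Y hY.
  rewrite -/(hgap Ys) -/(hgap Y) h5.
  have -> : hgap Y = 0 by apply/(hgap_zero (proj1 hY)).
  lra.
Qed.
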